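(* For any nested expression $F$ and any consistent sets of explicit literals $H\subseteq T$: (i) $H\models F^T$ iff ($T\models F$ and $H\models F^T_+$); (ii) $H=\!\!|\;F^T$ iff ($T=\!\!|\;F$ and $H=\!\!|\;F^T_-$).
   Context: Fix a set $\mathit{At}$ of atoms. An explicit literal is $p$ or $\sim p$; a set of explicit literals is consistent if it never contains both $p$ and $\sim p$. Formulas: $\varphi ::= p\mid\bot\mid\varphi\wedge\varphi\mid\varphi\vee\varphi\mid\varphi\to\varphi\mid\sim\varphi$ with $\neg\varphi:=\varphi\to\bot$, $\top:=\neg\bot$. Nested expressions are the formulas built from $\top,\bot$, atoms, $\wedge,\vee,\neg,\sim$. Classical satisfaction/falsification by a consistent set $T$: $T\not\models\bot$, $T=\!\!|\;\bot$; $T\models p$ iff $p\in T$, $T=\!\!|\;p$ iff $\sim p\in T$; $\wedge$: satisfied iff both, falsified iff at least one falsified; $\vee$: satisfied iff at least one, falsified iff both falsified; $T\models\sim\varphi$ iff $T=\!\!|\;\varphi$, $T=\!\!|\;\sim\varphi$ iff $T\models\varphi$; $T\models\varphi\to\psi$ iff $T\not\models\varphi$ or $T\models\psi$, $T=\!\!|\;\varphi\to\psi$ iff $T\models\varphi$ and $T=\!\!|\;\psi$ (so $T\models\neg\varphi$ iff $T\not\models\varphi$, $T=\!\!|\;\neg\varphi$ iff $T\models\varphi$; $T\models\top$ and $T$ does not falsify $\top$). Reduct of nested expressions: $\top^T=\top$, $\bot^T=\bot$, $p^T=p$, $(F\wedge G)^T=F^T\wedge G^T$, $(F\vee G)^T=F^T\vee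 G^T$, $(\sim F)^T=\sim(F^T)$, $(\neg F)^T=\bot$ if $T\models F$, $\top$ otherwise. Transformations $\varphi^T_+$, $\varphi^T_-$ (clauses for $\neg\alpha$ take priority over those for $\to$): $\varphi^T_+=\bot$ if $T\not\models\varphi$; otherwise $p^T_+=p$; $(\alpha\otimes\beta)^T_+=\alpha^T_+\otimes\beta^T_+$ for $\otimes\in\{\wedge,\vee\}$; $(\alpha\to\beta)^T_+=\neg(\alpha^T_+)\vee\beta^T_+$; $(\neg\alpha)^T_+=\neg(\alpha^T_+)$; $(\sim\alpha)^T_+=\sim(\alpha^T_-)$. $\varphi^T_-=\top$ if $T$ does not falsify $\varphi$; otherwise $p^T_-=p$; $\bot^T_-=\bot$; $(\alpha\otimes\beta)^T_-=\alpha^T_-\otimes\beta^T_-$; $(\alpha\to\beta)^T_-=\beta^T_-$; $(\neg\alpha)^T_-=\bot$; $(\sim\alpha)^T_-=\sim(\alpha^T_+)$. *)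

(* Defs.v *)
From Stdlib Require Import Bool.

Section Syntax.
Variable At : Type.

(* Formulas: p | bot | /\ | \/ | -> | ~ (strong negation "sim") *)
Inductive form : Type :=
| Atom : At -> form
| Bot : form
| And : form -> form -> form
| Or : form -> form -> form
| Imp : form -> form -> form
| Sneg : form -> form.

Definition Neg (f : form) : form := Imp f Bot.
Definition Top : form := Neg Bot.

Inductive lit : Type := Pos (p : At) | NegL (p : At).

Definition litset := lit -> bool.

Definition consistent (T : litset) : Prop :=
  forall p, ~ (T (Pos p) = true /\ T (NegL p) = true).

Definition subset (H T : litset) : Prop := forall l, H l = true -> T l = true.

Fixpoint sat (T : litset) (f : form) : bool :=
  match f with
  | Atom p => T (Pos p)
  | Bot => false
  | And a b => sat T a && sat T b
  | Or a b => sat T a || sat T b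
  | Imp a b => negb (sat T a) || sat T b
  | Sneg a => fals T a
  end
with fals (T : litset) (f : form) : bool :=
  match f with
  | Atom p => T (NegL p)
  | Bot => true
  | And a b => fals T a || fals T b
  | Or a b => fals T a && fals T b
  | Imp a b => sat T a && fals T b
  | Sneg a => sat T a
  end.

Fixpoint nested (f : form) : bool :=
  match f with
  | Atom _ => true
  | Bot => true
  | And a b => nested a && nested b
  | Or a b => nested a && nested b
  | Imp a Bot => nested a         (* neg a ; covers top = neg bot *)
  | Imp _ _ => false
  | Sneg a => nested a
  end.

(* reduct F^T of a nested expression
   (the last Imp clause is irrelevant for nested expressions) *)
Fixpoint reduct (T : litset) (f : form) : form :=
  match f with
  | Atom p => Atom p
  | Bot => Bot
  | And a b => And (reduct T a) (reduct T b)
  | Or a b => Or (reduct T a) (reduct T b)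
  | Imp a Bot => if sat T a then Bot else Top
  | Imp a b => Imp (reduct T a) (reduct T b)
  | Sneg a => Sneg (reduct T a)
  end.

(* transformations phi^T_+ and phi^T_- ; clauses for neg take priority *)
Fixpoint tplus (T : litset) (f : form) : form :=
  if negb (sat T f) then Bot else
  match f with
  | Atom p => Atom p
  | Bot => Bot
  | And a b => And (tplus T a) (tplus T b)
  | Or a b => Or (tplus T a) (tplus T b)
  | Imp a Bot => Neg (tplus T a)
  | Imp a b => Or (Neg (tplus T a)) (tplus T b)
  | Sneg a => Sneg (tminus T a)
  end
with tminus (T : litset) (f : form) : form :=
  if negb (fals T f) then Top else
  match f with
  | Atom p => Atom p
  | Bot => Bot
  | And a b => And (tminus T a) (tminus T b)
  | Or a b => Or (tminus T a) (tminus T b)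
  | Imp a Bot => Bot
  | Imp a b => tminus T b
  | Sneg a => Sneg (tplus T a)
  end.

End Syntax.

Arguments Atom {At}. Arguments Bot {At}. Arguments And {At}. Arguments Or {At}.
Arguments Imp {At}. Arguments Sneg {At}. Arguments Neg {At}. Arguments Top {At}.
Arguments Pos {At}. Arguments NegL {At}.
Arguments consistent {At}. Arguments subset {At}.
Arguments sat {At}. Arguments fals {At}. Arguments nested {At}.
Arguments reduct {At}. Arguments tplus {At}. Arguments tminus {At}.

(* Main.v *)
Require Import Defs.
From Stdlib Require Import Bool.

Lemma tplus_sat (At : Type) (H T : litset At) f :
  sat H (tplus T f) = true -> sat T f = true.
Proof.
  intros Hs. destruct (sat T f) eqn:E; auto.
  destruct f; cbn [tplus] in Hs; rewrite E in Hs; simpl in Hs; discriminate.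
Qed.

Lemma tminus_fals (At : Type) (H T : litset At) f :
  fals H (tminus T f) = true -> fals T f = true.
Proof.
  intros Hs. destruct (fals T f) eqn:E; auto.
  destruct f; cbn [tminus] in Hs; rewrite E in Hs; simpl in Hs; discriminate.
Qed.

Ltac brute H T :=
  repeat (simpl; match goal with
  | |- context [sat T ?f] => let e := fresh "e" in destruct (sat T f) eqn:e
  | |- context [fals T ?f] => let e := fresh "e" in destruct (fals T f) eqn:e
  | |- context [sat H (tplus T ?f)] => let e := fresh "e" in destruct (sat H (tplus T f)) eqn:e
  | |- context [fals H (tminus T ?f)] => let e := fresh "e" in destruct (fals H (tminus T f)) eqn:e
  end); simpl; try reflexivity; exfalso; intuition congruence.

Lemma main (At : Type) (F : form At) (H T : litset At) :
  nested F = true -> subset H T ->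
  sat H (reduct T F) = sat T F && sat H (tplus T F) /\
  fals H (reduct T F) = fals T F && fals H (tminus T F).
Proof.
  intros Hn Hsub. induction F; simpl in Hn.
  - split; cbn.
    + destruct (T (Pos a)) eqn:E; simpl; [reflexivity|].
      destruct (H (Pos a)) eqn:E1; [rewrite (Hsub _ E1) in E; discriminate|reflexivity].
    + destruct (T (NegL a)) eqn:E; simpl; [reflexivity|].
      destruct (H (NegL a)) eqn:E1; [rewrite (Hsub _ E1) in E; discriminate|reflexivity].
  - simpl. auto.
  - apply andb_true_iff in Hn as [H1 H2].
    destruct (IHF1 H1) as [A1 B1], (IHF2 H2) as [A2 B2].
    pose proof (@tplus_sat _ H T F1); pose proof (@tplus_sat _ H T F2);
    pose proof (@tminus_fals _ H T F1); pose proof (@tminus_fals _ H T F2).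
    split; cbn [reduct sat fals tplus tminus]; rewrite ?A1, ?A2, ?B1, ?B2;
    brute H T.
  - apply andb_true_iff in Hn as [H1 H2].
    destruct (IHF1 H1) as [A1 B1], (IHF2 H2) as [A2 B2].
    pose proof (@tplus_sat _ H T F1); pose proof (@tplus_sat _ H T F2);
    pose proof (@tminus_fals _ H T F1); pose proof (@tminus_fals _ H T F2).
    split; cbn [reduct sat fals tplus tminus]; rewrite ?A1, ?A2, ?B1, ?B2;
    brute H T.
  - destruct F2; try discriminate.
    destruct (IHF1 Hn) as [A1 B1].
    split; simpl; destruct (sat T F1) eqn:E1; simpl; auto.
    destruct (sat H (tplus T F1)) eqn:E2; auto.
    apply tplus_sat in E2. congruence.
  - destruct (IHF Hn) as [A1 B1].
    split; simpl; [rewrite B1|rewrite A1].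
    + destruct (fals T F); reflexivity.
    + destruct (sat T F); reflexivity.
Qed.

Theorem corollary2 (At : Type) (F : form At) (H T : litset At) :
  nested F = true -> consistent H -> consistent T -> subset H T ->
  (sat H (reduct T F) = true <-> (sat T F = true /\ sat H (tplus T F) = true)) /\
  (fals H (reduct T F) = true <-> (fals T F = true /\ fals H (tminus T F) = true)).
Proof.
  intros Hn _ _ Hsub. destruct (@main _ F H T Hn Hsub) as [A B].
  rewrite A, B. split; split; intros X; [apply andb_true_iff in X|apply andb_true_iff|apply andb_true_iff in X|apply andb_true_iff]; tauto.
Qed.
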